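(* Let $\Omega\subset\mathbb R^n$ be a $C^{1,\operatorname{Dini}}$ domain with $0\in\partial\Omega$, described near $0$ in coordinates $(x',x_n)$ by $B_{R_0}\cap\Omega=\{x_n<\varphi(x')\}$, $B_{R_0}\cap\partial\Omega=\{x_n=\varphi(x')\}$, with $\varphi(0)=0$ and $D'\varphi(0)=0$, so that the outer unit normal satisfies $\nu(0)=e_n=(0,\dots,0,1)$. Assume $R_0<1$, $\sup_{|x'|\le R_0}\sqrt{1+|D'\varphi(x')|^2}\le \tfrac32$, and let $\Lambda:(0,R_0]\to(0,\infty)$ be a non-decreasing function such that $$\sup_{x_1,x_2\in\partial\Omega\cap B_r}|\nu(x_2)-\nu(x_1)|\le\Lambda(r)\quad\text{for every }r\in(0,R_0],$$ and $\Lambda(R_0)<\tfrac1{1000}$. For $0<r\le R_0$ let $a=4\Lambda(r)r$ and $y_0=-a\nu(0)=(0,-a)$. Then for $0<r\le R_0$ the set $\Omega\cap B_{r-a}(y_0)$ is star-shaped with respect to $y_0$, and moreover for every $x\in\partial\Omega\cap B_r$, $$\frac{r\Lambda(r)}{2}\le\langle x-y_0,\nu(x)\rangle\le 10\, r\Lambda(r).$$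
   Context: $B_r$ is the open Euclidean ball of radius $r$ centered at $0$, $B_r(y)$ the one centered at $y$. A $C^{1,\operatorname{Dini}}$ domain is a connected bounded open set whose boundary is locally the graph $x_n=\varphi(x')$ of a function with $|D'\varphi(x_1')-D'\varphi(x_2')|\le\psi(|x_1'-x_2'|)$, $\int_0^2\psi(r)/r\,dr<\infty$, with $\Omega$ lying locally below the graph. The outer unit normal at $(x',\varphi(x'))$ is $\nu=\big(-D'\varphi,1\big)/\sqrt{1+|D'\varphi|^2}$. *)

(* Defs.v *)
(* Points of R^N are row vectors 'rV[R]_N, with N = n.+1
   so that x = (x', x_n) with x' : 'rV[R]_n and x_n the last coordinate. *)
From HB Require Import structures.
From mathcomp Require Import all_boot all_order all_algebra.
From mathcomp Require Import all_classical all_reals all_analysis.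
Set Implicit Arguments. Unset Strict Implicit. Unset Printing Implicit Defensive.
Import Order.TTheory GRing.Theory Num.Theory.
Import numFieldNormedType.Exports.
Local Open Scope classical_set_scope.
Local Open Scope ring_scope.

Section Defs.
Variable R : realType.

Definition dotv (N : nat) (x y : 'rV[R]_N) : R := \sum_(i < N) x 0 i * y 0 i.
Definition enorm (N : nat) (x : 'rV[R]_N) : R := Num.sqrt (dotv x x).

Definition eball (N : nat) (y : 'rV[R]_N) (r : R) : set 'rV[R]_N :=
  [set x | enorm (x - y) < r].

Definition bdry (N : nat) (A : set 'rV[R]_N) : set 'rV[R]_N :=
  closure A `\` interior A.

Definition xprime (n : nat) (x : 'rV[R]_n.+1) : 'rV[R]_n :=
  \row_(j < n) x 0 (widen_ord (leqnSn n) j).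
Definition xlast (n : nat) (x : 'rV[R]_n.+1) : R := x 0 ord_max.

Definition e_last (n : nat) : 'rV[R]_n.+1 := \row_(i < n.+1) (i == ord_max)%:R.

Definition grad (n : nat) (phi : 'rV[R]_n -> R) (x' : 'rV[R]_n) : 'rV[R]_n :=
  \row_(j < n) derive phi x' (delta_mx 0 j).

Definition normal_graph (n : nat) (phi : 'rV[R]_n -> R) (x : 'rV[R]_n.+1)
  : 'rV[R]_n.+1 :=
  let g := grad phi (xprime x) in
  (Num.sqrt (1 + enorm g ^+ 2))^-1 *:
    \row_(i < n.+1) match unlift ord_max i with
                    | Some j => - g 0 j
                    | None => 1
                    end.

Definition dini_modulus (psi : R -> R) : Prop :=
  (forall t, 0 <= psi t) /\
  measurable_fun (`]0%R, 2%R] : set R) psi /\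
  (\int[lebesgue_measure]_(t in `]0%R, 2%R]) ((psi t / t)%:E) < +oo)%E.

Definition C1Dini_on (n : nat) (phi : 'rV[R]_n -> R) (rho : R) : Prop :=
  (forall x', enorm x' <= rho -> differentiable phi x') /\
  exists psi : R -> R, dini_modulus psi /\
    forall x1 x2, enorm x1 <= rho -> enorm x2 <= rho ->
      enorm (grad phi x1 - grad phi x2) <= psi (enorm (x1 - x2)).

Definition orthogonal (N : nat) (Q : 'M[R]_N) : Prop := Q *m Q^T = 1%:M.

Definition C1Dini_domain (n : nat) (Om : set 'rV[R]_n.+1) : Prop :=
  open Om /\ connected Om /\ bounded_set Om /\
  forall p, bdry Om p ->
    exists (Q : 'M[R]_n.+1) (rho : R) (phi : 'rV[R]_n -> R),
      orthogonal Q /\ 0 < rho /\ C1Dini_on phi rho /\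
      forall x, enorm (x - p) < rho ->
        let z := (x - p) *m Q in
        (Om x <-> xlast z < phi (xprime z)) /\
        (bdry Om x <-> xlast z = phi (xprime z)).

Definition star_shaped (N : nat) (A : set 'rV[R]_N) (y : 'rV[R]_N) : Prop :=
  forall x, A x -> forall t : R, 0 <= t <= 1 -> A (y + t *: (x - y)).

End Defs.

(* Main.v *)
Require Import Defs.
From HB Require Import structures.
From mathcomp Require Import all_boot all_order all_algebra.
From mathcomp Require Import all_classical all_reals all_analysis.
From mathcomp Require Import ring lra.
Import Order.TTheory GRing.Theory Num.Theory.
Import numFieldNormedType.Exports.
Local Open Scope classical_set_scope.
Local Open Scope ring_scope.
Set Implicit Arguments. Unset Strict Implicit.

Section Vec.
Variable R : realType.
Implicit Types (N : nat).

Lemma dotvC {N} (x y : 'rV[R]_N) : dotv x y = dotv y x.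
Proof. by apply: eq_bigr => i _; rewrite mulrC. Qed.

Lemma dotvDl {N} (x y z : 'rV[R]_N) : dotv (x + y) z = dotv x z + dotv y z.
Proof. by rewrite /dotv -big_split; apply: eq_bigr => i _; rewrite !mxE mulrDl. Qed.

Lemma dotvZl {N} c (x z : 'rV[R]_N) : dotv (c *: x) z = c * dotv x z.
Proof. by rewrite /dotv mulr_sumr; apply: eq_bigr => i _; rewrite !mxE mulrA. Qed.

Lemma dotvNl {N} (x z : 'rV[R]_N) : dotv (- x) z = - dotv x z.
Proof. by rewrite -scaleN1r dotvZl mulN1r. Qed.

Lemma dotvBl {N} (x y z : 'rV[R]_N) : dotv (x - y) z = dotv x z - dotv y z.
Proof. by rewrite dotvDl dotvNl. Qed.

Lemma dotvDr {N} (x y z : 'rV[R]_N) : dotv z (x + y) = dotv z x + dotv z y.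
Proof. by rewrite dotvC dotvDl !(dotvC z). Qed.
Lemma dotvZr {N} c (x z : 'rV[R]_N) : dotv z (c *: x) = c * dotv z x.
Proof. by rewrite dotvC dotvZl dotvC. Qed.
Lemma dotvBr {N} (x y z : 'rV[R]_N) : dotv z (x - y) = dotv z x - dotv z y.
Proof. by rewrite dotvC dotvBl !(dotvC z). Qed.
Lemma dotv0l {N} (z : 'rV[R]_N) : dotv 0 z = 0.
Proof. by rewrite /dotv big1 // => i _; rewrite mxE mul0r. Qed.
Lemma dotv0r {N} (z : 'rV[R]_N) : dotv z 0 = 0.
Proof. by rewrite dotvC dotv0l. Qed.

Lemma dotv_ge0 {N} (x : 'rV[R]_N) : 0 <= dotv x x.
Proof. by apply: sumr_ge0 => i _; rewrite -expr2 sqr_ge0. Qed.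

Lemma enorm_ge0 {N} (x : 'rV[R]_N) : 0 <= enorm x.
Proof. exact: sqrtr_ge0. Qed.

Lemma enorm_sqr {N} (x : 'rV[R]_N) : enorm x ^+ 2 = dotv x x.
Proof. by rewrite /enorm sqr_sqrtr // dotv_ge0. Qed.

Lemma CS2 {N} (x y : 'rV[R]_N) : dotv x y ^+ 2 <= dotv x x * dotv y y.
Proof.
set A := dotv x x; set B := dotv x y; set C := dotv y y.
have hA : 0 <= A by exact: dotv_ge0.
have hC : 0 <= C by exact: dotv_ge0.
have h1 := dotv_ge0 (C *: x - B *: y).
rewrite !(dotvBl, dotvBr, dotvZl, dotvZr) -/A -/B -/C (dotvC y x) -/B in h1.
have h2 := dotv_ge0 (A *: y - B *: x).
rewrite !(dotvBl, dotvBr, dotvZl, dotvZr) -/A -/B -/C (dotvC y x) -/B in h2.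
have h3 := dotv_ge0 (x + y).
rewrite !(dotvDl, dotvDr) -/A -/B -/C (dotvC y x) -/B in h3.
have h4 := dotv_ge0 (x - y).
rewrite !(dotvBl, dotvBr) -/A -/B -/C (dotvC y x) -/B in h4.
have [C0|C0] := eqVneq C 0.
  have [A0|A0] := eqVneq A 0.
    have -> : B = 0 by move: h3 h4; rewrite A0 C0; lra.
    by rewrite A0 C0 expr0n /= mul0r.
  have Ap : 0 < A by rewrite lt0r A0.
  have : A * (- B ^+ 2) >= 0 by move: h2; rewrite C0; nra.
  rewrite pmulr_rge0 // C0 mulr0 oppr_ge0 => h; exact: h.
have Cp : 0 < C by rewrite lt0r C0.
have : C * (A * C - B ^+ 2) >= 0 by move: h1; nra.
by rewrite pmulr_rge0 // subr_ge0.
Qed.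

Lemma CS {N} (x y : 'rV[R]_N) : `|dotv x y| <= enorm x * enorm y.
Proof.
rewrite /enorm -sqrtrM ?dotv_ge0 // -sqrtr_sqr ler_sqrt ?CS2 //.
by rewrite mulr_ge0 ?dotv_ge0.
Qed.

Lemma enormZ {N} c (x : 'rV[R]_N) : enorm (c *: x) = `|c| * enorm x.
Proof.
by rewrite /enorm dotvZl dotvZr mulrA -expr2 sqrtrM ?sqr_ge0 // sqrtr_sqr.
Qed.

Lemma enormN {N} (x : 'rV[R]_N) : enorm (- x) = enorm x.
Proof. by rewrite -scaleN1r enormZ normrN normr1 mul1r. Qed.

Lemma enormD {N} (x y : 'rV[R]_N) : enorm (x + y) <= enorm x + enorm y.
Proof.
rewrite -(ler_pXn2r (n:=2)) ?nnegrE ?addr_ge0 ?enorm_ge0 //.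
rewrite enorm_sqr !(dotvDl, dotvDr) sqrrD !enorm_sqr (dotvC y x).
have := CS x y; have := ler_norm (dotv x y); lra.
Qed.

Lemma enorm_lt {N} (x : 'rV[R]_N) r : 0 < r -> (enorm x < r) = (dotv x x < r ^+ 2).
Proof.
move=> r0; rewrite -enorm_sqr ltr_pXn2r // ?nnegrE ?enorm_ge0 //; exact: ltW.
Qed.

Lemma enorm0 {N} : enorm (0 : 'rV[R]_N) = 0.
Proof. by rewrite /enorm dotv0l sqrtr0. Qed.

End Vec.
Section Coord.
Variable R : realType.
Variable n : nat.

Lemma widen_unlift (j : 'I_n) : unlift ord_max (widen_ord (leqnSn n) j) = Some j.
Proof.
have -> : widen_ord (leqnSn n) j = lift ord_max j by by apply: val_inj; rewrite /= /bump leqNgt ltn_ord.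
exact: liftK.
Qed.

Lemma dotv_split (x y : 'rV[R]_n.+1) :
  dotv x y = dotv (xprime x) (xprime y) + xlast x * xlast y.
Proof. by rewrite /dotv big_ord_recr /=; congr (_ + _); apply: eq_bigr => j _; rewrite !mxE. Qed.

Lemma xprimeD (x y : 'rV[R]_n.+1) : xprime (x + y) = xprime x + xprime y.
Proof. by apply/rowP => j; rewrite !mxE. Qed.
Lemma xprimeZ c (x : 'rV[R]_n.+1) : xprime (c *: x) = c *: xprime x.
Proof. by apply/rowP => j; rewrite !mxE. Qed.
Lemma xprimeN (x : 'rV[R]_n.+1) : xprime (- x) = - xprime x.
Proof. by apply/rowP => j; rewrite !mxE. Qed.
Lemma xprimeB (x y : 'rV[R]_n.+1) : xprime (x - y) = xprime x - xprime y.
Proof. by rewrite xprimeD xprimeN. Qed.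
Lemma xlastD (x y : 'rV[R]_n.+1) : xlast (x + y) = xlast x + xlast y.
Proof. by rewrite /xlast !mxE. Qed.
Lemma xlastZ c (x : 'rV[R]_n.+1) : xlast (c *: x) = c * xlast x.
Proof. by rewrite /xlast !mxE. Qed.
Lemma xlastN (x : 'rV[R]_n.+1) : xlast (- x) = - xlast x.
Proof. by rewrite /xlast !mxE. Qed.
Lemma xlastB (x y : 'rV[R]_n.+1) : xlast (x - y) = xlast x - xlast y.
Proof. by rewrite xlastD xlastN. Qed.
Lemma xprime0 : xprime (0 : 'rV[R]_n.+1) = 0.
Proof. by apply/rowP => j; rewrite !mxE. Qed.
Lemma xlast0 : xlast (0 : 'rV[R]_n.+1) = 0.
Proof. by rewrite /xlast !mxE. Qed.

Lemma xprime_elast : xprime (e_last R n) = 0.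
Proof.
apply/rowP => j; rewrite !mxE; case: eqP => // /(congr1 val) /= h.
by move: (ltn_ord j); rewrite h ltnn.
Qed.
Lemma xlast_elast : xlast (e_last R n) = 1.
Proof. by rewrite /xlast mxE eqxx. Qed.

Definition mkpt (y : 'rV[R]_n) (c : R) : 'rV[R]_n.+1 :=
  \row_(i < n.+1) match unlift ord_max i with Some j => y 0 j | None => c end.

Lemma xprime_mkpt y c : xprime (mkpt y c) = y.
Proof. by apply/rowP => j; rewrite !mxE widen_unlift. Qed.
Lemma xlast_mkpt y c : xlast (mkpt y c) = c.
Proof. by rewrite /xlast mxE unlift_none. Qed.

Definition sfac (phi : 'rV[R]_n -> R) (y : 'rV[R]_n) :=
  Num.sqrt (1 + enorm (grad phi y) ^+ 2).

Lemma sfac_ge1 phi y : 1 <= sfac phi y.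
Proof. rewrite /sfac -{1}sqrtr1 ler_sqrt; first by rewrite lerDl sqr_ge0. by rewrite addr_ge0 ?sqr_ge0. Qed.

Lemma xprime_normal phi x :
  xprime (normal_graph phi x) = - (sfac phi (xprime x))^-1 *: grad phi (xprime x).
Proof. by apply/rowP => j; rewrite !mxE widen_unlift /grad !mxE mulrN mulNr. Qed.
Lemma xlast_normal phi x :
  xlast (normal_graph phi x) = (sfac phi (xprime x))^-1.
Proof. by rewrite /xlast !mxE unlift_none mulr1. Qed.

End Coord.
Section Calc.
Variable R : realType.
Variable n : nat.
Variable phi : 'rV[R]_n -> R.

Lemma derive_grad (y v : 'rV[R]_n) : differentiable phi y ->
  'D_v phi y = dotv (grad phi y) v.
Proof.
move=> dy; rewrite deriveE // {1}(row_sum_delta v) linear_sum /dotv.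
apply: eq_bigr => j _; rewrite linearZ /= -deriveE // /grad mxE mulrC.
by [].
Qed.

Lemma seg_derive (v : 'rV[R]_n) u : differentiable phi (u *: v) ->
  derivable (fun t : R => phi (t *: v)) u 1 /\
  'D_1 (fun t : R => phi (t *: v)) u = dotv (grad phi (u *: v)) v.
Proof.
move=> du.
have E : (fun h : R => h^-1 *: (((fun t : R => phi (t *: v)) \o shift u) (h *: 1)
            - phi (u *: v))) =
         (fun h : R => h^-1 *: ((phi \o shift (u *: v)) (h *: v) - phi (u *: v))).
  by apply: funext => h /=; rewrite /shift /= scalerDl [h *: 1]mulr1.
split; first by rewrite /derivable E; exact: diff_derivable.
by rewrite /derive E -derive_grad.
Qed.

Lemma mvt_seg (v : 'rV[R]_n) (a b : R) :
  (forall u, 0 <= u <= 1 -> differentiable phi (u *: v)) ->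
  0 <= a -> a < b -> b <= 1 ->
  exists2 t, a < t < b &
    phi (b *: v) - phi (a *: v) = dotv (grad phi (t *: v)) v * (b - a).
Proof.
move=> hd a0 ab b1.
have D : forall u, 0 <= u <= 1 -> derivable (fun t : R => phi (t *: v)) u 1 /\
  'D_1 (fun t : R => phi (t *: v)) u = dotv (grad phi (u *: v)) v.
  by move=> u hu; apply: seg_derive; apply: hd.
have H1 : forall x, x \in `]a, b[ ->
    is_derive x 1 (fun t : R => phi (t *: v)) (dotv (grad phi (x *: v)) v).
  move=> x; rewrite in_itv /= => /andP [ax xb].
  have [h1 h2] := D x ltac:(apply/andP; split; lra).
  by apply: DeriveDef.
have H2 : {within `[a, b], continuous (fun t : R => phi (t *: v))}.
  apply: derivable_within_continuous => x; rewrite in_itv /= => /andP [ax xb].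
  by have [h1 _] := D x ltac:(apply/andP; split; lra).
have [t ht ->] := MVT ab H1 H2.
by exists t => //; move: ht; rewrite in_itv.
Qed.

Lemma seg_cont (v : 'rV[R]_n) u : differentiable phi (u *: v) ->
  {for u, continuous (fun t : R => phi (t *: v))}.
Proof.
move=> du; apply: differentiable_continuous; apply/derivable1_diffP.
by have [] := @seg_derive v u du.
Qed.

End Calc.

Lemma cont_eps (R : realType) (f : R -> R) s : {for s, continuous f} ->
  forall e, 0 < e -> exists2 d, 0 < d & forall u, `|u - s| < d -> `|f u - f s| < e.
Proof.
move=> /cvgrPdist_lt H e e0; have /nbhs_ballP [d d0 Hd] := H e e0.
exists d => // u us; rewrite distrC; apply: Hd.
by rewrite -ball_normE /ball_ /= distrC.
Qed.
Lemma cont_ind (R : realType) (Q : R -> Prop) :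
  (forall s, 0 <= s <= 1 -> (forall u, s < u <= 1 -> Q u) -> Q s) ->
  (forall s, 0 < s <= 1 -> (forall u, s <= u <= 1 -> Q u) ->
     exists2 d, 0 < d & forall u, 0 <= u -> s - d <= u <= s -> Q u) ->
  forall u, 0 <= u <= 1 -> Q u.
Proof.
move=> H1 H2.
pose S := [set s : R | 0 <= s <= 1 /\ forall u, s <= u <= 1 -> Q u].
have Q1 : Q 1 by apply: H1; [rewrite ler01 lexx | move=> u; lra].
have S1 : S 1.
  split; first by rewrite ler01 lexx.
  by move=> u hu; have -> : u = 1 by lra.
have lbS : has_lbound S by exists 0 => y [/andP [] + _].
have neS : S !=set0 by exists 1.
pose m := inf S.
have m0 : 0 <= m by apply: lb_le_inf => // y [/andP []].
have m1 : m <= 1 by exact: ge_inf.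
have Qgt : forall u, m < u <= 1 -> Q u.
  move=> u /andP [mu u1].
  have [e [/andP [e0 e1] He] eu] := inf_adherent (eps := u - m) ltac:(by rewrite subr_gt0) (conj neS lbS).
  rewrite addrC subrK in eu.
  by apply: He; rewrite (ltW eu) u1.
have Qm : Q m by apply: H1 => //; rewrite m0 m1.
have Sm : S m.
  split; first by rewrite m0 m1.
  move=> u /andP [mu u1]; have [E|mu'] := eqVneq m u; first by rewrite -E.
  by apply: Qgt; rewrite u1 andbT lt_neqAle mu' mu.
have [mz|mp] := eqVneq m 0.
  by move=> u /andP [u0 u1]; apply: Sm.2; rewrite mz u0 u1.
have mpos : 0 < m by rewrite lt0r mp m0.
have [d d0 Hd] := H2 m ltac:(by rewrite mpos m1) Sm.2.
pose s' := m - Num.min d m.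
have mdm : 0 < Num.min d m by rewrite lt_min d0 mpos.
have hs1 : Num.min d m <= d by rewrite ge_min lexx.
have hs2 : Num.min d m <= m by rewrite ge_min lexx orbT.
have Ss' : S s'.
  split; first by apply/andP; split; rewrite /s'; lra.
  move=> u /andP [su u1]; have [um|mu] := lerP u m.
    by apply: Hd; rewrite /s' in su; [lra| apply/andP; split; lra].
  by apply: Qgt; rewrite mu u1.
have := ge_inf lbS Ss'; rewrite -/m /s'; lra.
Qed.
Lemma a_props (R : realFieldType) (L r : R) : 0 < L -> L < 1/1000 -> 0 < r ->
  0 < 4 * L * r /\ 4 * L * r < r.
Proof.
move=> L0 L1 r0; split; first by rewrite !mulr_gt0.
have : 4 * L * r < 1 * r by rewrite ltr_pM2r //; lra.
by rewrite mul1r.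
Qed.

Lemma g1_ar (R : realFieldType) (P xn a : R) : xn < P -> 0 < P - (- a * 1 + 1 * (xn - - a * 1)).
Proof. move=> h; lra. Qed.

Lemma g0_ar (R : realFieldType) (a k : R) : 0 < a -> 0 < 0 - (- a * 1 + 0 * k).
Proof. move=> h; lra. Qed.

Lemma contra4 (R : realFieldType) (a b : R) : `|b - a| < - a -> 0 < b -> False.
Proof. move=> h1 h2; have := ler_norm (b - a); lra. Qed.

Lemma contra5 (R : realFieldType) (a b : R) : `|b - a| < a -> 0 < b.
Proof. move=> h1; have := ler_norm (a - b); rewrite distrC; lra. Qed.

Lemma dist2 (R : realFieldType) (s u d : R) : s - d / 2 <= u -> u <= s -> 0 < d -> `|u - s| < d.
Proof. move=> h1 h2 h3; rewrite distrC ger0_norm; lra. Qed.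

Lemma pos_ar (R : realFieldType) (s S G k : R) : 0 < s -> 0 < S ->
  0 < s * (- S^-1 * G + k * S^-1) -> G < k.
Proof.
move=> s0 S0; rewrite pmulr_rgt0 //.
have -> : - S^-1 * G + k * S^-1 = S^-1 * (k - G) by ring.
by rewrite pmulr_rgt0 ?invr_gt0 // subr_gt0.
Qed.

Lemma quot_ar (R : realFieldType) (tau s hs ht k c0 : R) : 0 < tau ->
  0 < ht - (c0 + (tau + s) * k) -> hs - (c0 + s * k) = 0 -> k < tau^-1 * (ht - hs).
Proof.
move=> t0 h1 h2; rewrite ltr_pdivlMl //.
have -> : ht - hs = (ht - (c0 + (tau + s) * k)) - (hs - (c0 + s * k)) + tau * k by ring.
rewrite h2 subr0 ltrDr //.
Qed.

Lemma zero_le (R : realFieldType) (a : R) : a <= 0 -> 0 <= a -> a = 0.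
Proof. by move=> h1 h2; apply/eqP; rewrite eq_le h1 h2. Qed.

Lemma deriv_right (R : realType) (h : R -> R) s c (eta : R) : derivable h s 1 -> 0 < eta ->
  (forall tau, 0 < tau < eta -> c < tau^-1 * (h (tau + s) - h s)) -> c <= 'D_1 h s.
Proof.
move=> dh eta0 H; rewrite leNgt; apply/negP => Dc.
have := dh; rewrite /derivable => /cvgrPdist_lt /(_ (c - 'D_1 h s)).
rewrite subr_gt0 => /(_ Dc).
rewrite -[lim _]/('D_1 h s).
move=> /nbhs_ballP [d d0 Hd].
have [tau [tau0 [h1 h2]]] : exists tau : R, 0 < tau /\ tau <= d / 2 /\ tau <= eta / 2.
  exists (Num.min (d / 2) (eta / 2)); split; first by rewrite lt_min !divr_gt0.
  by rewrite !ge_min !lexx orbT.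
have taud : `|0 - tau| < d.
  rewrite sub0r normrN gtr0_norm //; apply: le_lt_trans h1 _.
  by rewrite ltr_pdivrMr // ltr_pMr // ltr1n.
have := Hd tau taud (lt0r_neq0 tau0).
have := H tau ltac:(apply/andP; split => //; apply: le_lt_trans h2 _; by rewrite ltr_pdivrMr // ltr_pMr // ltr1n).
rewrite /= /shift /= [tau%:A]mulr1.
set q := tau^-1 * _.
move=> hq hd.
have E : tau^-1 *: (h (tau + s) - h s) = q by [].
rewrite E in hd; have := ler_norm (q - 'D_1 h s); rewrite distrC; lra.
Qed.

Lemma final_arith (R : realFieldType) (s N Lm l r : R) : 1 <= s -> s <= 3/2 ->
  `|N| <= 16/5 * Lm * l -> 0 < Lm -> 0 <= l -> l <= r ->
  r * Lm / 2 <= s^-1 * (N + 4 * Lm * r) /\ s^-1 * (N + 4 * Lm * r) <= 10 * r * Lm.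
Proof.
move=> s1 s2 hN Lm0 l0 lr.
have hlr : Lm * l <= Lm * r by apply: ler_wpM2l => //; exact: ltW.
have hl0 : 0 <= Lm * l by rewrite mulr_ge0 // ltW.
have hN1 := ler_norm N; have hN2 := ler_norm (- N); rewrite normrN in hN2.
have hX1 : 4/5 * (Lm * r) <= N + 4 * Lm * r by lra.
have hX2 : N + 4 * Lm * r <= 36/5 * (Lm * r) by lra.
have s0 : 0 < s by lra.
have hrL : 0 <= Lm * r by lra.
split.
  rewrite ler_pdivlMl //.
  have : s * (r * Lm / 2) <= 3/2 * (r * Lm / 2).
    by apply: ler_wpM2r => //; rewrite mulrC; lra.
  rewrite [r * Lm]mulrC; lra.
rewrite ler_pdivrMl //.
have : 1 * (10 * r * Lm) <= s * (10 * r * Lm).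
  by apply: ler_wpM2r => //; rewrite -mulrA [r * Lm]mulrC; lra.
rewrite -mulrA [r * Lm]mulrC; lra.
Qed.

Lemma D_ident (R : realFieldType) (s' G P a : R) :
  - s' * G + (P - - a * 1) * s' = s' * ((P - G) + a).
Proof. by ring. Qed.

Lemma contra1 (R : realFieldType) (a b c : R) : `|b - a| < a - c -> b <= c -> False.
Proof. move=> h1 h2; have := ler_norm (a - b); rewrite distrC; lra. Qed.

Lemma contra2 (R : realFieldType) (a b c M : R) : `|b - a| < M - c -> a <= c -> b < M.
Proof. move=> h1 h2; have := ler_norm (b - a); lra. Qed.

Lemma dist_small (R : realFieldType) (s w u d : R) :
  s - d / 2 <= u -> u < w -> w < s -> 0 < d -> `|w - s| < d.
Proof. move=> h1 h2 h3 h4; rewrite distrC ger0_norm; lra. Qed.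

Lemma min_props (R : realFieldType) (d s : R) : 0 < d -> s < 1 ->
  0 < Num.min (d / 2) (1 - s) /\ Num.min (d / 2) (1 - s) <= 1 - s /\
  `|(s + Num.min (d / 2) (1 - s)) - s| < d.
Proof.
move=> d0 s1; have h1 : 0 < Num.min (d / 2) (1 - s) by rewrite lt_min; apply/andP; split; lra.
have h2 : Num.min (d / 2) (1 - s) <= d / 2 by rewrite ge_min lexx.
have h3 : Num.min (d / 2) (1 - s) <= 1 - s by rewrite ge_min lexx orbT.
split => //; split => //; rewrite addrC addKr ger0_norm; lra.
Qed.

Lemma alg_hA (R : realFieldType) (s1 s2 P1 P2 : R) :
  - s2^-1 * P2 - - s1^-1 * P1 = - s2^-1 * P2 + s1^-1 * P1.
Proof. by rewrite !mulNr opprK. Qed.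

Lemma alg_id (R : realFieldType) (s1 s2 P1 P2 : R) : s1 != 0 -> s2 != 0 ->
  P1 - P2 = s1 * (- s2^-1 * P2 + s1^-1 * P1) + s1 * (s2^-1 - s1^-1) * P2.
Proof. by move=> h1 h2; field; rewrite h1 h2. Qed.

Lemma fin_bound (R : realFieldType) (s1 A L P2 Lm ew : R) : 1 <= s1 -> s1 <= 3/2 ->
  `|A| <= Lm * ew -> `|L| <= Lm -> `|P2| <= 28/25 * ew -> 0 <= Lm -> 0 <= ew ->
  `|s1 * A + s1 * L * P2| <= 16/5 * Lm * ew.
Proof.
move=> s1g s1l hA hL hP Lp ew0.
apply: le_trans (ler_normD _ _) _.
rewrite !normrM !(ger0_norm (le_trans ler01 s1g)).
have s10 : 0 <= s1 by clear -s1g; lra.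
have t1 := ler_pM s10 (normr_ge0 A) s1l hA.
have t2a := ler_pM s10 (normr_ge0 L) s1l hL.
have t2 := ler_pM (mulr_ge0 s10 (normr_ge0 L)) (normr_ge0 P2) t2a hP.
have := mulr_ge0 Lp ew0; clear -t1 t2; lra.
Qed.

Lemma arith_ray (R : realFieldType) (u l L2 f1 fu P Lm : R) : 0 <= u -> u < 1 -> 0 <= l ->
  L2 = l * l -> f1 - fu = P * (1 - u) -> `|P| <= 16/5 * Lm * l -> 0 <= Lm -> Lm < 1/1000 ->
  `|f1| <= 28/25 * l -> u * u * L2 + fu * fu <= L2 + f1 * f1.
Proof.
move=> u0 u1 l0 -> hf hP Lm0 Lm1 hf1.
have hP' : `|P| <= l / 100.
  apply: le_trans hP _; have : Lm * l <= 1/1000 * l by apply: ler_wpM2r => //; clear -Lm1; lra.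
  clear -l0; lra.
have hPP : P * P <= l * l / 10000.
  have -> : P * P = `|P| * `|P| by rewrite -normrM ger0_norm // -expr2 sqr_ge0.
  have := ler_pM (normr_ge0 P) (normr_ge0 P) hP' hP'; clear; lra.
have hfP : - (f1 * P) <= 28/25 * l * (l / 100).
  have := ler_pM (normr_ge0 f1) (normr_ge0 P) hf1 hP'.
  have := ler_norm (- (f1 * P)); rewrite normrN normrM. clear; lra.
have -> : fu = f1 - P * (1 - u) by rewrite -hf; ring.
set v := 1 - u.
have v0 : 0 < v by rewrite /v; clear -u1; lra.
have v1 : v <= 1 by rewrite /v; clear -u0; lra.
have -> : u = 1 - v by rewrite /v; ring.
have h1 : v * (P * P) <= l * l / 10000.
  have : v * (P * P) <= 1 * (P * P) by apply: ler_wpM2r; [rewrite -expr2 sqr_ge0|].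
  clear -hPP; lra.
have h2 : 0 <= l * l by rewrite mulr_ge0.
have : v * (v * (P * P) - 2 * (f1 * P)) <= v * ((2 - v) * (l * l)).
  apply: ler_wpM2l; first by clear -v0; lra.
  have : 1 * (l * l) <= (2 - v) * (l * l) by apply: ler_wpM2r => //; clear -v1; lra.
  clear -h1 hfP h2 l0; nra.
move=> h; have -> : (1 - v) * (1 - v) * (l * l) + (f1 - P * v) * (f1 - P * v) =
   l * l + f1 * f1 - v * ((2 - v) * (l * l)) + v * (v * (P * P) - 2 * (f1 * P)) by ring.
clear -h; lra.
Qed.


Section Main.
Variables (R : realType) (n : nat) (Om : set 'rV[R]_n.+1)
  (phi : 'rV[R]_n -> R) (R0 : R) (Lam : R -> R).
Hypothesis R0p : 0 < R0.
Hypothesis Hdiff : forall y, enorm y <= R0 -> differentiable phi y.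
Hypothesis Hbd : forall x, eball 0 R0 x -> (bdry Om x <-> xlast x = phi (xprime x)).
Hypothesis phi0 : phi 0 = 0.
Hypothesis grad0 : grad phi 0 = 0.
Hypothesis Hs : forall y, enorm y <= R0 -> sfac phi y <= 3 / 2.
Hypothesis Lpos : forall r, 0 < r <= R0 -> 0 < Lam r.
Hypothesis Hnu : forall r, 0 < r <= R0 -> forall x1 x2,
      bdry Om x1 -> eball 0 r x1 -> bdry Om x2 -> eball 0 r x2 ->
      enorm (normal_graph phi x2 - normal_graph phi x1) <= Lam r.
Hypothesis LR0 : Lam R0 < 1 / 1000.
Hypothesis HOm : forall x, eball 0 R0 x -> (Om x <-> xlast x < phi (xprime x)).
Hypothesis Lmono : forall r s, 0 < r -> r <= s -> s <= R0 -> Lam r <= Lam s.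

Lemma enorm_xprime (x : 'rV[R]_n.+1) : enorm (xprime x) <= enorm x.
Proof.
rewrite /enorm ler_sqrt ?dotv_ge0 // [X in _ <= X]dotv_split lerDl -expr2.
exact: sqr_ge0.
Qed.

Lemma enorm_xlast (x : 'rV[R]_n.+1) : `|xlast x| <= enorm x.
Proof.
rewrite /enorm -sqrtr_sqr ler_sqrt ?dotv_ge0 // [X in _ <= X]dotv_split lerDr -?expr2.
exact: dotv_ge0.
Qed.

Lemma sfac_sqr y : sfac phi y ^+ 2 = 1 + enorm (grad phi y) ^+ 2.
Proof. by rewrite /sfac sqr_sqrtr // addr_ge0 ?sqr_ge0. Qed.

Lemma grad_small y w : enorm y <= R0 -> `|dotv (grad phi y) w| <= 28 / 25 * enorm w.
Proof.
move=> hy; have h := Hs hy; have h1 := sfac_ge1 phi y.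
have hp : enorm (grad phi y) ^+ 2 <= 5 / 4.
  have : sfac phi y ^+ 2 <= (3/2) ^+ 2 by rewrite ler_pXn2r ?nnegrE //; lra.
  rewrite sfac_sqr; lra.
have hp' : enorm (grad phi y) <= 28 / 25.
  have := enorm_ge0 (grad phi y); nra.
apply: (le_trans (CS _ _)); apply: ler_wpM2r => //; exact: enorm_ge0.
Qed.

Definition onb (rho : R) (x : 'rV[R]_n.+1) := eball 0 rho x /\ xlast x = phi (xprime x).

Lemma Kbound rho x1 x2 w : 0 < rho <= R0 -> onb rho x1 -> onb rho x2 ->
  `|dotv (grad phi (xprime x1)) w - dotv (grad phi (xprime x2)) w|
     <= 16 / 5 * Lam rho * enorm w.
Proof.
move=> /andP [rho0 rhoR] [b1 e1] [b2 e2].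
have ball_R0 : forall x : 'rV[R]_n.+1, eball 0 rho x -> eball 0 R0 x.
  by move=> x hx; exact: lt_le_trans hx rhoR.
have bd1 : bdry Om x1 by apply/Hbd => //; exact: ball_R0.
have bd2 : bdry Om x2 by apply/Hbd => //; exact: ball_R0.
have Hd := Hnu (r := rho) ltac:(by rewrite rho0 rhoR) bd1 b1 bd2 b2.
have y1R : enorm (xprime x1) <= R0.
  apply: le_trans (enorm_xprime _) _; move: b1; rewrite /eball /= subr0 => h.
  exact: ltW (lt_le_trans h rhoR).
have y2R : enorm (xprime x2) <= R0.
  apply: le_trans (enorm_xprime _) _; move: b2; rewrite /eball /= subr0 => h.
  exact: ltW (lt_le_trans h rhoR).
set d := normal_graph phi x2 - normal_graph phi x1 in Hd.
set s1 := sfac phi (xprime x1); set s2 := sfac phi (xprime x2).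
set P1 := dotv (grad phi (xprime x1)) w; set P2 := dotv (grad phi (xprime x2)) w.
have s1g : 1 <= s1 := sfac_ge1 _ _.
have s2g : 1 <= s2 := sfac_ge1 _ _.
have s1l : s1 <= 3/2 := Hs y1R.
have hA : dotv (xprime d) w = - s2^-1 * P2 + s1^-1 * P1.
  by rewrite /d xprimeB !xprime_normal dotvBl !dotvZl -/s1 -/s2 -/P1 -/P2 alg_hA.
have hL : xlast d = s2^-1 - s1^-1 by rewrite /d xlastB !xlast_normal.
have Dsplit : enorm d ^+ 2 = enorm (xprime d) ^+ 2 + xlast d ^+ 2.
  by rewrite !enorm_sqr dotv_split expr2.
have hAb : `|dotv (xprime d) w| <= Lam rho * enorm w.
  apply: le_trans (CS _ _) _; apply: ler_wpM2r; first exact: enorm_ge0.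
  apply: le_trans Hd; exact: le_trans (enorm_xprime _) (lexx _).
have hLb : `|xlast d| <= Lam rho.
  apply: le_trans Hd.
  rewrite -(ler_pXn2r (n:=2)) ?nnegrE ?enorm_ge0 // ?normr_ge0 // Dsplit real_normK ?num_real //.
  by rewrite lerDr sqr_ge0.
have hP2 := grad_small w y2R; rewrite -/P2 in hP2.
have Id : P1 - P2 = s1 * dotv (xprime d) w + s1 * xlast d * P2.
  rewrite hA hL; apply: alg_id; apply: lt0r_neq0.
    exact: lt_le_trans ltr01 s1g.
  exact: lt_le_trans ltr01 s2g.
rewrite Id; apply: fin_bound => //; last exact: enorm_ge0.
by apply: ltW; apply: Lpos; rewrite rho0 rhoR.
Qed.

Lemma ball_dot (z : 'rV[R]_n.+1) r : 0 < r -> eball 0 r z <-> dotv z z < r ^+ 2.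
Proof. by move=> r0; rewrite /eball /= subr0 enorm_lt. Qed.

Lemma dotv_mkpt (y : 'rV[R]_n) c : dotv (mkpt y c) (mkpt y c) = dotv y y + c * c.
Proof. by rewrite dotv_split xprime_mkpt xlast_mkpt. Qed.

Lemma dotv_scale (y : 'rV[R]_n) u : dotv (u *: y) (u *: y) = u * u * dotv y y.
Proof. by rewrite dotvZl dotvZr mulrA. Qed.

Lemma enorm_scale_le (y : 'rV[R]_n) u : 0 <= u <= 1 -> enorm (u *: y) <= enorm y.
Proof.
move=> /andP [u0 u1]; rewrite enormZ ger0_norm //.
by rewrite -[X in _ <= X]mul1r ler_wpM2r // enorm_ge0.
Qed.

Lemma onb_mkpt rho y : 0 < rho -> dotv y y + phi y * phi y < rho ^+ 2 ->
  onb rho (mkpt y (phi y)).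
Proof.
move=> r0 h; split; first by apply/ball_dot => //; rewrite dotv_mkpt.
by rewrite xlast_mkpt xprime_mkpt.
Qed.

Lemma onb0 rho : 0 < rho -> onb rho 0.
Proof.
move=> r0; split; first by apply/ball_dot => //; rewrite dotv0l expr2 mulr_gt0.
by rewrite xprime0 xlast0 phi0.
Qed.

Lemma onb_R0 rho x : rho <= R0 -> onb rho x -> onb R0 x.
Proof. by move=> hr [b e]; split => //; move: b; rewrite /eball /= => b; exact: lt_le_trans b hr. Qed.

Lemma onb_enorm rho x : onb rho x -> enorm (xprime x) < rho.
Proof. by case=> b _; move: b; rewrite /eball /= subr0; apply: le_lt_trans; exact: enorm_xprime. Qed.

Lemma phi_bound (x' : 'rV[R]_n) : enorm x' <= R0 -> `|phi x'| <= 28/25 * enorm x'.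
Proof.
move=> hx.
have hd : forall u, 0 <= u <= 1 -> differentiable phi (u *: x').
  by move=> u hu; apply: Hdiff; exact: le_trans (enorm_scale_le _ hu) hx.
have [t /andP [t0 t1] E] := mvt_seg hd (lexx 0) ltr01 (lexx 1).
move: E; rewrite scale1r scale0r phi0 subr0 subr0 mulr1 => ->.
apply: grad_small; apply: le_trans hx; apply: enorm_scale_le.
by rewrite ltW // ltW.
Qed.

Lemma ray_in r x : 0 < r <= R0 -> onb r x ->
  forall u, 0 <= u <= 1 -> onb r (mkpt (u *: xprime x) (phi (u *: xprime x))).
Proof.
move=> /andP [r0 rR] hx.
have [bx ex] := hx.
set x' := xprime x.
have hx'R : enorm x' <= R0 by apply: ltW; exact: lt_le_trans (onb_enorm hx) rR.
have hd : forall u, 0 <= u <= 1 -> differentiable phi (u *: x').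
  by move=> u hu; apply: Hdiff; exact: le_trans (enorm_scale_le _ hu) hx'R.
set L2 := dotv x' x'.
set c2 := dotv x x.
have c2E : c2 = L2 + phi (1 *: x') * phi (1 *: x') by rewrite /c2 dotv_split ex scale1r.
have c2r : c2 < r ^+ 2 by apply/ball_dot.
pose G u := u * u * L2 + phi (u *: x') * phi (u *: x').
have Gc : forall u, 0 <= u <= 1 -> {for u, continuous G}.
  move=> u hu; have hc := seg_cont (hd u hu).
  apply: continuousD; apply: continuousM => //.
  apply: continuousM; exact: cvg_id.
  exact: cvg_cst.
have R0c2 : c2 < R0 ^+ 2 by apply: lt_le_trans c2r _; rewrite !expr2 ler_pM // ltW.
have key : forall u, 0 <= u -> u < 1 -> (forall w, u < w < 1 -> G w < R0 ^+ 2) -> G u <= c2.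
  move=> u u0 u1 hw.
  have [t /andP [ut t1] E] := mvt_seg hd u0 u1 (lexx 1).
  have t01 : 0 <= t <= 1 by rewrite (ltW t1) (le_trans u0 (ltW ut)).
  have ont : onb R0 (mkpt (t *: x') (phi (t *: x'))).
    by apply: onb_mkpt => //; rewrite dotv_scale; apply: hw; rewrite ut t1.
  have K := Kbound (rho:=R0) x' ltac:(by rewrite R0p lexx) ont (onb0 R0p).
  rewrite xprime_mkpt xprime0 grad0 dotv0l subr0 in K.
  rewrite c2E /G; apply: (arith_ray u0 u1 (enorm_ge0 x')).
  - by rewrite /L2 -enorm_sqr expr2.
  - exact: E.
  - exact: K.
  - by apply: ltW; apply: Lpos; rewrite R0p lexx.
  - exact: LR0.
  - by rewrite scale1r; apply: phi_bound.
have all : forall u, 0 <= u <= 1 -> G u <= c2.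
  apply: (cont_ind (Q := fun u => G u <= c2)).
  - move=> s /andP [s0 s1] hQ; have [->|s1'] := eqVneq s 1.
      by rewrite /G !mul1r c2E.
    have s1l : s < 1 by rewrite lt_neqAle s1' s1.
    rewrite leNgt; apply/negP => hlt.
    have [d d0 Hd] := cont_eps (Gc s ltac:(by rewrite s0 s1)) (e := G s - c2)
      ltac:(by rewrite subr_gt0).
    have [t0 [t1 td]] := min_props d0 s1l.
    set t := Num.min (d / 2) (1 - s) in t0 t1 td.
    apply: (contra1 (Hd _ td)); apply: hQ; apply/andP; split.
      by rewrite ltrDl.
    by rewrite -lerBrDl.
  - move=> s /andP [s0 s1] hQ.
    have Gs : G s <= c2 by apply: hQ; rewrite lexx s1.
    have [d d0 Hd] := cont_eps (Gc s ltac:(by rewrite (ltW s0) s1)) (e := R0 ^+ 2 - c2)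
      ltac:(by rewrite subr_gt0).
    exists (d / 2); first by rewrite divr_gt0.
    move=> u u0 /andP [sdu us]; have [->|us'] := eqVneq u s; first exact: Gs.
    have ul : u < s by rewrite lt_neqAle us' us.
    apply: key => //; first exact: lt_le_trans ul s1.
    move=> w /andP [uw w1]; have [sw|ws] := lerP s w.
      by apply: le_lt_trans R0c2; apply: hQ; rewrite sw ltW.
    exact: contra2 (Hd _ (dist_small sdu uw ws d0)) Gs.
move=> u hu; apply: onb_mkpt => //; rewrite dotv_scale.
exact: le_lt_trans (all u hu) c2r.
Qed.

Lemma main_bound r x : 0 < r <= R0 -> onb r x ->
  r * Lam r / 2 <= dotv (x - (- (4 * Lam r * r)) *: e_last R n) (normal_graph phi x) /\
  dotv (x - (- (4 * Lam r * r)) *: e_last R n) (normal_graph phi x) <= 10 * r * Lam r.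
Proof.
move=> hr hx; have [bx ex] := hx.
have /andP [r0 rR] := hr.
set x' := xprime x.
have hx'R : enorm x' <= R0 by apply: ltW; exact: lt_le_trans (onb_enorm hx) rR.
have hd : forall u, 0 <= u <= 1 -> differentiable phi (u *: x').
  by move=> u hu; apply: Hdiff; exact: le_trans (enorm_scale_le _ hu) hx'R.
have [t /andP [t0 t1] E] := mvt_seg hd (lexx 0) ltr01 (lexx 1).
move: E; rewrite scale1r scale0r phi0 subr0 subr0 mulr1 => E.
have ont := ray_in hr hx (u := t) ltac:(by rewrite !ltW).
have K := Kbound (rho:=r) x' hr ont hx.
rewrite xprime_mkpt -/x' in K.
rewrite dotv_split xprimeB xprimeZ xprime_elast scaler0 subr0 xlastB xlastZ xlast_elast.
rewrite xprime_normal xlast_normal dotvZr -/x' ex E (dotvC x') D_ident.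
apply: final_arith K _ (enorm_ge0 x') _.
- exact: sfac_ge1.
- exact: Hs.
- by apply: Lpos.
- exact: ltW (onb_enorm hx).
Qed.

Lemma enorm_elast : enorm (e_last R n) = 1.
Proof. by rewrite /enorm dotv_split xprime_elast xlast_elast dotv0l add0r mulr1 sqrtr1. Qed.

Lemma star r : 0 < r <= R0 ->
  star_shaped (Om `&` eball ((- (4 * Lam r * r)) *: e_last R n) (r - 4 * Lam r * r))
    ((- (4 * Lam r * r)) *: e_last R n).
Proof.
move=> hr; have /andP [r0 rR] := hr.
have Lr0 : 0 < Lam r := Lpos hr.
have Lr1 : Lam r < 1/1000 := le_lt_trans (Lmono r0 rR (lexx R0)) LR0.
have [a0 ar] := a_props Lr0 Lr1 r0.
set a := 4 * Lam r * r in a0 ar *.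
set y0 := (- a) *: e_last R n.
have ey0 : enorm y0 = a by rewrite /y0 enormZ normrN gtr0_norm // enorm_elast mulr1.
have inball : forall z : 'rV[R]_n.+1, enorm (z - y0) < r - a -> enorm z < r.
  move=> z hz; rewrite -(subrK y0 z); apply: le_lt_trans (enormD _ _) _.
  by rewrite ey0 -ltrBrDr.
move=> x [Omx bx] t /andP [t0 t1].
have bx' : enorm (x - y0) < r - a by [].
have xr : enorm x < r := inball x bx'.
have hball : forall u, 0 <= u <= 1 -> enorm ((y0 + u *: (x - y0)) - y0) < r - a.
  move=> u /andP [u0 u1]; rewrite [y0 + _]addrC addrK enormZ ger0_norm //.
  by apply: le_lt_trans bx'; rewrite -[X in _ <= X]mul1r ler_wpM2r // enorm_ge0.
have ball0 : forall z : 'rV[R]_n.+1, enorm z < r -> eball 0 R0 z.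
  by move=> z hz; rewrite /eball /= subr0; have := lt_le_trans hz rR.
have ball0r : forall z : 'rV[R]_n.+1, enorm z < r -> eball 0 r z.
  by move=> z hz; rewrite /eball /= subr0.
set x' := xprime x; set xn := xlast x.
have hpz : forall w : R, xprime (y0 + w *: (x - y0)) = w *: x'.
  by move=> w; rewrite xprimeD !xprimeZ xprimeB xprimeZ xprime_elast scaler0 subr0 add0r.
have hlz : forall w : R, xlast (y0 + w *: (x - y0)) = - a * 1 + w * (xn - - a * 1).
  by move=> w; rewrite xlastD !xlastZ xlastB xlastZ xlast_elast.
have hx'R : enorm x' <= R0.
  by apply: ltW; apply: lt_le_trans rR; exact: le_lt_trans (enorm_xprime _) xr.
have hd : forall u, 0 <= u <= 1 -> differentiable phi (u *: x').
  by move=> v hv; apply: Hdiff; exact: le_trans (enorm_scale_le _ hv) hx'R.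
pose g (v : R) := phi (v *: x') - (- a * 1 + v * (xn - - a * 1)).
have Gc : forall u, 0 <= u <= 1 -> {for u, continuous g}.
  move=> u hu; have hc := seg_cont (hd u hu).
  apply: continuousD => //; apply: continuousN; apply: continuousD; first exact: cvg_cst.
  apply: continuousM; [exact: cvg_id | exact: cvg_cst].
have g1 : 0 < g 1.
  rewrite /g scale1r; apply: g1_ar.
  by have /(HOm (ball0 _ xr)) := Omx.
have g0 : 0 < g 0 by rewrite /g scale0r phi0; apply: g0_ar.
have gall : forall u, 0 <= u <= 1 -> 0 < g u.
  apply: (cont_ind (Q := fun u => 0 < g u)).
  - move=> s /andP [s0 s1] hQ; have [->|s1'] := eqVneq s 1; first exact: g1.
    have [->|s0'] := eqVneq s 0; first exact: g0.
    have s1l : s < 1 by rewrite lt_neqAle s1' s1.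
    have s0l : 0 < s by rewrite lt_neqAle eq_sym s0' s0.
    have s01 : 0 <= s <= 1 by rewrite s0 s1.
    rewrite ltNge; apply/negP => gs0.
    have gsge : 0 <= g s.
      rewrite leNgt; apply/negP => gneg.
      have [d d0 Hd] := cont_eps (Gc s s01) (e := - g s) ltac:(by rewrite oppr_gt0).
      have [t0' [t1' td]] := min_props d0 s1l.
      apply: (contra4 (Hd _ td)); apply: hQ; apply/andP; split.
        by rewrite ltrDl.
      by rewrite -lerBrDl.
    have gs : g s = 0 := zero_le gs0 gsge.
    pose zs := y0 + s *: (x - y0).
    have zsr : enorm zs < r := inball _ (hball s s01).
    have onzs : onb r zs.
      split; first exact: ball0r.
      by rewrite /zs hpz hlz; apply/eqP; rewrite eq_sym -subr_eq0; apply/eqP.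
    have [mb _] := main_bound hr onzs.
    have hzy : zs - y0 = s *: (x - y0) by rewrite /zs [y0 + _]addrC addrK.
    rewrite -/a -/y0 hzy dotvZl dotv_split xprimeB xlastB xprime_normal xlast_normal in mb.
    rewrite /y0 xprimeZ xprime_elast scaler0 subr0 xlastZ xlast_elast dotvZr in mb.
    rewrite /zs hpz -/x' -/xn in mb.
    have Sp : 0 < sfac phi (s *: x') := lt_le_trans ltr01 (sfac_ge1 _ _).
    have hpos : 0 < s * (- (sfac phi (s *: x'))^-1 * dotv x' (grad phi (s *: x')) +
                 (xn - - a * 1) * (sfac phi (s *: x'))^-1).
      apply: lt_le_trans mb; apply: divr_gt0 => //; exact: mulr_gt0.
    have Glt := pos_ar s0l Sp hpos.
    have [dh Dh] := seg_derive (hd s s01).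
    have := deriv_right (c := xn - - a * 1) (eta := 1 - s) dh ltac:(by rewrite subr_gt0) _.
    rewrite Dh dotvC => hge.
    move: Glt; rewrite ltNge hge //.
    move=> tau /andP [tau0 tau1].
    apply: (quot_ar (s := s) (c0 := - a * 1) tau0); last by rewrite /g in gs.
    have := hQ (tau + s) ltac:(apply/andP; split; [by rewrite ltrDr | by rewrite -lerBrDr ltW]).
    by rewrite /g.
  - move=> s /andP [s0 s1] hQ.
    have gs : 0 < g s by apply: hQ; rewrite lexx s1.
    have [d d0 Hd] := cont_eps (Gc s ltac:(by rewrite (ltW s0) s1)) gs.
    exists (d / 2); first by rewrite divr_gt0.
    move=> u u0 /andP [sdu us].
    exact: contra5 (Hd _ (dist2 sdu us d0)).
split.
  apply/(HOm (ball0 _ (inball _ (hball t ltac:(by rewrite t0 t1))))).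
  by rewrite hpz hlz -subr_gt0; apply: gall; rewrite t0 t1.
exact: (hball t ltac:(by rewrite t0 t1)).
Qed.

End Main.

Unset Implicit Arguments.

Theorem lemma3p2 (R : realType) (n : nat) (Om : set 'rV[R]_n.+1)
  (phi : 'rV[R]_n -> R) (R0 : R) (Lam : R -> R) :
  C1Dini_domain Om ->
  bdry Om 0 ->
  0 < R0 -> R0 < 1 ->
  C1Dini_on phi R0 ->
  (forall x, eball 0 R0 x -> (Om x <-> xlast x < phi (xprime x))) ->
  (forall x, eball 0 R0 x -> (bdry Om x <-> xlast x = phi (xprime x))) ->
  phi 0 = 0 ->
  grad phi 0 = 0 ->
  (forall x', enorm x' <= R0 -> Num.sqrt (1 + enorm (grad phi x') ^+ 2) <= 3 / 2) ->
  (forall r, 0 < r <= R0 -> 0 < Lam r) ->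
  (forall r s, 0 < r -> r <= s -> s <= R0 -> Lam r <= Lam s) ->
  (forall r, 0 < r <= R0 -> forall x1 x2,
      bdry Om x1 -> eball 0 r x1 -> bdry Om x2 -> eball 0 r x2 ->
      enorm (normal_graph phi x2 - normal_graph phi x1) <= Lam r) ->
  Lam R0 < 1 / 1000 ->
  forall r, 0 < r <= R0 ->
    let a := 4 * Lam r * r in
    let y0 := - a *: e_last R n in
    star_shaped (Om `&` eball y0 (r - a)) y0 /\
    (forall x, bdry Om x -> eball 0 r x ->
       r * Lam r / 2 <= dotv (x - y0) (normal_graph phi x) /\
       dotv (x - y0) (normal_graph phi x) <= 10 * r * Lam r).
Proof.
move=> _ _ R0p _ [Hdiff _] HOm Hbd phi0 grad0 Hs Lpos Lmono Hnu LR0 r hr a y0.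
split.
  exact: (star R0p Hdiff Hbd phi0 grad0 Hs Lpos Hnu LR0 HOm Lmono hr).
move=> x bx bxr.
have /andP [r0 rR] := hr.
have hon : onb phi r x.
  split => //; apply/(Hbd x _) => //.
  by move: bxr; rewrite /eball /= => h; have := lt_le_trans h rR.
exact: (main_bound R0p Hdiff Hbd phi0 grad0 Hs Lpos Hnu LR0 hr hon).
Qed.
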